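(* Let $a\neq 0$ be a real number and let $(P_n(x))_{n\ge0}$ be a sequence of polynomials such that $$\sum_{n\ge0}P_n(x)\frac{t^n}{n!}=f(t)e^{xt}$$ for some $f$ holomorphic at $0$ with $f(0)\neq0$, and such that $P_n(a-x)=(-1)^nP_n(x)$ for all $n\ge0$. Let $(a_k)_{k\in\mathbb{N}}$ be a sequence of real numbers such that the power series $F(t)=f(t)-\sum_{k\ge0}a_k\frac{t^k}{k!}$ (with $f$ replaced by its Taylor series at $0$) is odd or even. Then for every $n\ge0$: $$P_n(x)=\sum_{\substack{0\le k\le n\\ k\text{ even}}}a_k\binom{n}{k}a^{n-k}E_{n-k}\!\left(\frac{x}{a}\right)\quad\text{if }F\text{ is odd},$$ $$P_n(x)=-2\sum_{\substack{1\le k\le n+1\\ k\text{ odd}}}\frac{a_k}{k}\binom{n}{k-1}a^{n-k}B_{n-k+1}\!\left(\frac{x}{a}\right)\quad\text{if }F\text{ is even}.$$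
   Context: $B_n(x)$ and $E_n(x)$ denote the Bernoulli and Euler polynomials, defined by $\sum_{n\ge0}B_n(x)\frac{t^n}{n!}=\frac{te^{xt}}{e^t-1}$ and $\sum_{n\ge0}E_n(x)\frac{t^n}{n!}=\frac{2e^{xt}}{e^t+1}$. *)

(* Defs.v *)
From Stdlib Require Import Reals List Arith.
From Coquelicot Require Import Coquelicot.
Open Scope R_scope.

Definition csum_lt (n : nat) (F : nat -> Complex.C) : Complex.C :=
  fold_right Cplus (RtoC 0) (map F (seq 0 n)).

Fixpoint cpow (z : Complex.C) (n : nat) : Complex.C :=
  match n with O => RtoC 1 | S m => Cmult z (cpow z m) end.

Definition cexp (z : Complex.C) : Complex.C :=
  (exp (Re z) * cos (Im z), exp (Re z) * sin (Im z)).

Definition cbinom (n k : nat) : Complex.C := RtoC (Binomial.C n k).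
Definition cfact (n : nat) : Complex.C := RtoC (INR (fact n)).

Fixpoint upto (g : nat -> (nat -> Complex.C) -> Complex.C) (n : nat) : nat -> Complex.C :=
  match n with
  | O => fun _ => g O (fun _ => RtoC 0)
  | S m => let b := upto g m in
           fun k => if Nat.leb k m then b k else g (S m) b
  end.
Definition strong_rec (g : nat -> (nat -> Complex.C) -> Complex.C) (n : nat) : Complex.C :=
  upto g n n.

(* Bernoulli polynomials: t e^{xt}/(e^t-1) = sum_n B_n(x) t^n/n!.
   Comparing coefficients of t^{n+1}/(n+1)! in  t e^{xt} = (e^t - 1) sum B_n(x) t^n/n!
   gives (n+1) x^n = sum_{k=0}^n C(n+1,k) B_k(x), i.e.
   B_n(x) = x^n - 1/(n+1) sum_{k<n} C(n+1,k) B_k(x). *)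
Definition bernoulli_poly (n : nat) (x : Complex.C) : Complex.C :=
  strong_rec (fun m b =>
    Cminus (cpow x m)
      (Cmult (Cinv (RtoC (INR (S m))))
             (csum_lt m (fun k => Cmult (cbinom (S m) k) (b k))))) n.

(* Euler polynomials: 2 e^{xt}/(e^t+1) = sum_n E_n(x) t^n/n!.
   Comparing coefficients in 2 e^{xt} = (e^t + 1) sum E_n(x) t^n/n! gives
   2 x^n = E_n(x) + sum_{k=0}^n C(n,k) E_k(x), i.e.
   E_n(x) = x^n - 1/2 sum_{k<n} C(n,k) E_k(x). *)
Definition euler_poly (n : nat) (x : Complex.C) : Complex.C :=
  strong_rec (fun m b =>
    Cminus (cpow x m)
      (Cmult (Cinv (RtoC 2))
             (csum_lt m (fun k => Cmult (cbinom m k) (b k))))) n.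

Definition holomorphic_at0 (f : Complex.C -> Complex.C) : Prop :=
  exists r : R, 0 < r /\
    forall z : Complex.C, Cmod z < r ->
      exists l : Complex.C, @is_derive C_AbsRing C_NormedModule f z l.

Definition taylor_series_at0 (f : Complex.C -> Complex.C) (c : nat -> Complex.C) : Prop :=
  exists r : R, 0 < r /\
    forall t : Complex.C, Cmod t < r -> is_pseries c t (f t).

Definition is_poly_fun (p : Complex.C -> Complex.C) : Prop :=
  exists (d : nat) (q : nat -> Complex.C),
    forall x, p x = csum_lt d (fun k => Cmult (q k) (cpow x k)).

Definition ps_odd (s : nat -> Complex.C) : Prop :=
  forall k, Nat.even k = true -> s k = RtoC 0.
Definition ps_even (s : nat -> Complex.C) : Prop :=
  forall k, Nat.odd k = true -> s k = RtoC 0.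

(* Main.v *)
Require Import Defs.
From Stdlib Require Import Reals List Arith ZArith Lia Lra.
From Coquelicot Require Import Coquelicot.
Open Scope R_scope.

Fixpoint sm (n : nat) (F : nat -> C) : C :=
  match n with O => RtoC 0 | S m => Cplus (sm m F) (F m) end.

Section Alg.
Local Open Scope C_scope.

Lemma fold_sm n F z : fold_right Cplus z (map F (seq 0 n)) = sm n F + z.
Proof.
  revert z. induction n; intros z. simpl. ring.
  rewrite seq_S, map_app, fold_right_app. simpl. rewrite IHn. ring.
Qed.
Lemma csum_sm n F : csum_lt n F = sm n F.
Proof. unfold csum_lt. rewrite fold_sm. ring. Qed.

Lemma sm_ext n F G : (forall k, (k < n)%nat -> F k = G k) -> sm n F = sm n G.
Proof. induction n; intros H; simpl. auto. rewrite IHn, H; auto. Qed.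
Lemma sm_plus n F G : sm n (fun k => F k + G k) = sm n F + sm n G.
Proof. induction n; simpl. ring. rewrite IHn. ring. Qed.
Lemma sm_minus n F G : sm n (fun k => F k - G k) = sm n F - sm n G.
Proof. induction n; simpl. ring. rewrite IHn. ring. Qed.
Lemma sm_scal n z F : sm n (fun k => z * F k) = z * sm n F.
Proof. induction n; simpl. ring. rewrite IHn. ring. Qed.
Lemma sm_zero n : sm n (fun _ => RtoC 0) = RtoC 0.
Proof. induction n; simpl. auto. rewrite IHn. ring. Qed.
Lemma sm_first n F : sm (S n) F = F O + sm n (fun k => F (S k)).
Proof. induction n. simpl. ring. change (sm (S (S n)) F) with (sm (S n) F + F (S n)). rewrite IHn. simpl. ring. Qed.
Lemma sm_rev n F : sm n F = sm n (fun k => F (n - 1 - k)%nat).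
Proof.
  induction n. auto.
  change (sm (S n) F) with (sm n F + F n). rewrite IHn, sm_first. rewrite Cplus_comm. f_equal.
  f_equal; lia. apply sm_ext. intros k Hk. f_equal. lia.
Qed.

Lemma sm_swap n (G : nat -> nat -> C) :
  sm (S n) (fun i => sm (S i) (fun k => G i k)) =
  sm (S n) (fun k => sm (S (n - k)) (fun j => G (k + j)%nat k)).
Proof.
  induction n.
  - simpl. ring.
  - change (sm (S (S n)) (fun i => sm (S i) (fun k => G i k))) with
      (sm (S n) (fun i => sm (S i) (fun k => G i k)) + sm (S (S n)) (fun k => G (S n) k)).
    rewrite IHn.
    change (sm (S (S n)) (fun k => sm (S (S n - k)) (fun j => G (k + j)%nat k))) with
      (sm (S n) (fun k => sm (S (S n - k)) (fun j => G (k + j)%nat k)) + sm (S (S n - S n)) (fun j => G (S n + j)%nat (S n))).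
    replace (S n - S n)%nat with O by lia.
    rewrite (sm_ext (S n) (fun k => sm (S (S n - k)) (fun j => G (k + j)%nat k))
              (fun k => sm (S (n - k)) (fun j => G (k + j)%nat k) + G (S n) k)).
    2:{ intros k Hk. replace (S n - k)%nat with (S (n - k)) by lia.
        change (sm (S (S (n - k))) (fun j => G (k + j)%nat k)) with
          (sm (S (n - k)) (fun j => G (k + j)%nat k) + G (k + S (n - k))%nat k).
        f_equal. f_equal. lia. }
    rewrite sm_plus. change (sm (S (S n)) (fun k => G (S n) k)) with (sm (S n) (fun k => G (S n) k) + G (S n) (S n)). change (sm 1 (fun j => G (S n + j)%nat (S n))) with (RtoC 0 + G (S n + 0)%nat (S n)). rewrite Nat.add_0_r, Cplus_0_l, <- Cplus_assoc. reflexivity.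
Qed.

Definition cv (u v : nat -> C) (n : nat) : C := sm (S n) (fun k => u k * v (n - k)%nat).

Lemma cv_ext u u' v v' n : (forall k, u k = u' k) -> (forall k, v k = v' k) -> cv u v n = cv u' v' n.
Proof. intros Hu Hv. unfold cv. apply sm_ext. intros. rewrite Hu, Hv. auto. Qed.
Lemma cv_comm u v n : cv u v n = cv v u n.
Proof.
  unfold cv. rewrite sm_rev. apply sm_ext. intros k Hk.
  replace (S n - 1 - k)%nat with (n - k)%nat by lia.
  replace (n - (n - k))%nat with k by lia. ring.
Qed.
Lemma cv_addl u u' v n : cv (fun k => u k + u' k) v n = cv u v n + cv u' v n.
Proof. unfold cv. rewrite <- sm_plus. apply sm_ext. intros. ring. Qed.
Lemma cv_subl u u' v n : cv (fun k => u k - u' k) v n = cv u v n - cv u' v n.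
Proof. unfold cv. rewrite <- sm_minus. apply sm_ext. intros. ring. Qed.
Lemma cv_scall z u v n : cv (fun k => z * u k) v n = z * cv u v n.
Proof. unfold cv. rewrite <- sm_scal. apply sm_ext. intros. ring. Qed.
Lemma cv_assoc u v w n : cv (cv u v) w n = cv u (cv v w) n.
Proof.
  unfold cv.
  rewrite (sm_ext (S n) _ (fun i => sm (S i) (fun k => u k * v (i - k)%nat * w (n - i)%nat))).
  2:{ intros i Hi. rewrite Cmult_comm, <- sm_scal. apply sm_ext. intros. ring. }
  rewrite sm_swap. apply sm_ext. intros k Hk.
  rewrite <- sm_scal. apply sm_ext. intros j Hj.
  replace (k + j - k)%nat with j by lia. replace (n - (k + j))%nat with (n - k - j)%nat by lia. ring.
Qed.

Definition shift (v : nat -> C) (n : nat) : C := match n with O => RtoC 0 | S j => v j end.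
Lemma cv_shift u v n : cv u (shift v) (S n) = cv u v n.
Proof.
  unfold cv. change (sm (S (S n)) (fun k => u k * shift v (S n - k)%nat)) with
    (sm (S n) (fun k => u k * shift v (S n - k)%nat) + u (S n) * shift v (S n - S n)%nat).
  replace (S n - S n)%nat with O by lia. simpl shift at 2.
  rewrite Cmult_0_r, Cplus_0_r. apply sm_ext. intros k Hk.
  replace (S n - k)%nat with (S (n - k)) by lia. reflexivity.
Qed.
Lemma cv_shift0 u v : cv u (shift v) O = RtoC 0.
Proof. unfold cv. simpl. ring. Qed.

Lemma cv_head u v n : cv u v n = u O * v n + sm n (fun k => u (S k) * v (n - S k)%nat).
Proof. unfold cv. rewrite sm_first. rewrite Nat.sub_0_r. reflexivity. Qed.

Lemma two_neq : RtoC 2 <> RtoC 0.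
Proof. intro H. apply RtoC_inj in H. lra. Qed.

Lemma L_inj (al u v : nat -> C) : al O = RtoC 1 ->
  (forall n, cv al u n + u n = cv al v n + v n) -> forall n, u n = v n.
Proof.
  intros H0 H n. induction n as [n IH] using lt_wf_ind.
  specialize (H n). rewrite !cv_head, H0 in H.
  rewrite (sm_ext n (fun k => al (S k) * u (n - S k)%nat) (fun k => al (S k) * v (n - S k)%nat)) in H.
  2:{ intros k Hk. rewrite IH. auto. lia. }
  assert (E : RtoC 2 * u n = RtoC 2 * v n).
  { replace (RtoC 2) with (RtoC 1 + RtoC 1) by (rewrite <- RtoC_plus; f_equal; lra).
    set (s := sm n _) in H. 
    assert (E2 : (RtoC 1 * u n + s + u n) - s = (RtoC 1 * v n + s + v n) - s) by (rewrite H; auto).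
    ring_simplify in E2. ring_simplify. exact E2. }
  apply (f_equal (fun z => / RtoC 2 * z)) in E. field_simplify in E; try exact two_neq.
  exact E.
Qed.

Lemma M_head (al u : nat -> C) n : al O = RtoC 1 ->
  cv al u (S n) - u (S n) = al 1%nat * u n + sm n (fun k => al (S (S k)) * u (n - S k)%nat).
Proof.
  intros H0. rewrite cv_head, H0. rewrite sm_first. simpl (S n - 1)%nat. rewrite Nat.sub_0_r.
  assert (E : sm n (fun k => al (S (S k)) * u (S n - S (S k))%nat) = sm n (fun k => al (S (S k)) * u (n - S k)%nat)).
  { apply sm_ext. intros. reflexivity. }
  rewrite E. ring.
Qed.

Lemma M_inj (al u v : nat -> C) : al O = RtoC 1 -> al 1%nat <> RtoC 0 ->
  (forall n, cv al u n - u n = cv al v n - v n) -> forall n, u n = v n.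
Proof.
  intros H0 H1 H n. induction n as [n IH] using lt_wf_ind.
  specialize (H (S n)). rewrite !M_head in H by auto.
  rewrite (sm_ext n (fun k => al (S (S k)) * u (n - S k)%nat) (fun k => al (S (S k)) * v (n - S k)%nat)) in H.
  2:{ intros k Hk. rewrite IH. auto. lia. }
  set (s := sm n _) in H.
  assert (E2 : al 1%nat * u n = al 1%nat * v n).
  { assert (E3 : al 1%nat * u n + s - s = al 1%nat * v n + s - s) by (rewrite H; auto).
    ring_simplify in E3. exact E3. }
  apply (f_equal (fun z => / al 1%nat * z)) in E2. field_simplify in E2; auto.
Qed.

End Alg.

Lemma sum_n_C_fst (a : nat -> C) n : fst (@sum_n C_AbelianGroup a n) = @sum_n R_AbelianGroup (fun k => fst (a k)) n.
Proof.
  induction n. rewrite !sum_O. reflexivity.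
  rewrite !sum_Sn. simpl. rewrite <- IHn. reflexivity.
Qed.
Lemma sum_n_C_snd (a : nat -> C) n : snd (@sum_n C_AbelianGroup a n) = @sum_n R_AbelianGroup (fun k => snd (a k)) n.
Proof.
  induction n. rewrite !sum_O. reflexivity.
  rewrite !sum_Sn. simpl. rewrite <- IHn. reflexivity.
Qed.

Lemma Cseries_fst (a : nat -> C) l :
  @is_series C_AbsRing C_NormedModule a l -> @is_series R_AbsRing R_NormedModule (fun n => fst (a n)) (fst l).
Proof.
  intros H P [eps He].
  assert (H1 := H (fun z : C => P (fst z))).
  destruct H1 as [N HN].
  { exists eps. intros y Hy. apply He. destruct Hy as [Hy1 Hy2]. exact Hy1. }
  exists N. intros n Hn. specialize (HN n Hn). unfold filtermap in HN |- *.
  rewrite <- sum_n_C_fst. exact HN.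
Qed.
Lemma Cseries_snd (a : nat -> C) l :
  @is_series C_AbsRing C_NormedModule a l -> @is_series R_AbsRing R_NormedModule (fun n => snd (a n)) (snd l).
Proof.
  intros H P [eps He].
  assert (H1 := H (fun z : C => P (snd z))).
  destruct H1 as [N HN].
  { exists eps. intros y Hy. apply He. destruct Hy as [Hy1 Hy2]. exact Hy2. }
  exists N. intros n Hn. specialize (HN n Hn). unfold filtermap in HN |- *.
  rewrite <- sum_n_C_snd. exact HN.
Qed.

Lemma lim0_bound (u : nat -> R) : is_lim_seq u 0 -> exists M, forall n, Rabs (u n) <= M.
Proof.
  intros H. apply is_lim_seq_spec in H.
  destruct (H (mkposreal 1 Rlt_0_1)) as [N HN]. simpl in HN.
  assert (Hf : forall N, exists M0, forall n, (n < N)%nat -> Rabs (u n) <= M0).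
  { induction N0. exists 0. intros; lia.
    destruct IHN0 as [M0 HM0]. exists (Rmax M0 (Rabs (u N0))). intros n Hn.
    destruct (Nat.eq_dec n N0). subst. apply Rmax_r.
    eapply Rle_trans. apply HM0. lia. apply Rmax_l. }
  destruct (Hf N) as [M0 HM0]. exists (Rmax M0 1). intros n.
  destruct (Nat.lt_ge_cases n N).
  eapply Rle_trans. apply HM0. auto. apply Rmax_l.
  eapply Rle_trans. 2: apply Rmax_r. specialize (HN n H0). rewrite Rminus_0_r in HN. lra.
Qed.

Lemma radius_ge (a : nat -> R) r : 0 < r -> ex_pseries a r -> Rbar_le r (CV_radius a).
Proof.
  intros Hr [l Hl]. apply is_pseries_R in Hl.
  assert (H0 := ex_series_lim_0 _ (ex_intro _ l Hl)).
  destruct (lim0_bound _ H0) as [M HM].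
  destruct (CV_radius_bounded a) as [Hub _].
  apply Hub. exists M. exact HM.
Qed.

Lemma radius_gt (a : nat -> R) rho : (forall s, Rabs s < rho -> ex_pseries a s) ->
  forall s, Rabs s < rho -> Rbar_lt (Rabs s) (CV_radius a).
Proof.
  intros H s Hs.
  assert (Hr : Rbar_le ((Rabs s + rho)/2) (CV_radius a)).
  { apply radius_ge. pose proof (Rabs_pos s). lra.
    apply H. rewrite Rabs_pos_eq. lra. pose proof (Rabs_pos s). lra. }
  eapply Rbar_lt_le_trans. 2: exact Hr. simpl. lra.
Qed.

Lemma ps_unique (u v : nat -> R) rho (g : R -> R) : 0 < rho ->
  (forall s, Rabs s < rho -> is_pseries u s (g s)) ->
  (forall s, Rabs s < rho -> is_pseries v s (g s)) -> forall n, u n = v n.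
Proof.
  intros Hrho Hu Hv n.
  assert (Ru : Rbar_lt 0 (CV_radius u)).
  { assert (H := radius_gt u rho (fun s Hs => ex_intro _ _ (Hu s Hs)) 0).
    rewrite Rabs_R0 in H. apply H. auto. }
  assert (Rv : Rbar_lt 0 (CV_radius v)).
  { assert (H := radius_gt v rho (fun s Hs => ex_intro _ _ (Hv s Hs)) 0).
    rewrite Rabs_R0 in H. apply H. auto. }
  pose proof (Derive_n_coef u n Ru) as Eu.
  pose proof (Derive_n_coef v n Rv) as Ev.
  assert (E : Derive_n (PSeries u) n 0 = Derive_n (PSeries v) n 0).
  { apply Derive_n_ext_loc. exists (mkposreal rho Hrho). intros s Hs.
    assert (Hs' : Rabs s < rho).
    { unfold ball in Hs. simpl in Hs. unfold AbsRing_ball, abs, minus, plus, opp in Hs. simpl in Hs.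
      rewrite Ropp_0, Rplus_0_r in Hs. exact Hs. }
    rewrite (is_pseries_unique _ _ _ (Hu s Hs')). rewrite (is_pseries_unique _ _ _ (Hv s Hs')). reflexivity. }
  rewrite Eu, Ev in E. apply Rmult_eq_reg_r in E. exact E.
  apply not_0_INR. apply fact_neq_0.
Qed.

Lemma sm_fst n F : fst (sm (S n) F) = sum_f_R0 (fun k => fst (F k)) n.
Proof. induction n. simpl. ring. change (fst (sm (S n) F) + fst (F (S n)) = sum_f_R0 (fun k => fst (F k)) (S n)). rewrite IHn. reflexivity. Qed.
Lemma sm_snd n F : snd (sm (S n) F) = sum_f_R0 (fun k => snd (F k)) n.
Proof. induction n. simpl. ring. change (snd (sm (S n) F) + snd (F (S n)) = sum_f_R0 (fun k => snd (F k)) (S n)). rewrite IHn. reflexivity. Qed.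

Lemma C_ext (z w : C) : fst z = fst w -> snd z = snd w -> z = w.
Proof. destruct z, w; simpl; intros; subst; auto. Qed.

Lemma cpow_R s n : cpow (RtoC s) n = RtoC (s ^ n).
Proof. induction n; simpl. reflexivity. rewrite IHn, RtoC_mult. reflexivity. Qed.
Lemma pow_n_R (s : R) n : @pow_n C_Ring (RtoC s) n = RtoC (s ^ n).
Proof. induction n; simpl. reflexivity. rewrite IHn. change (mult (RtoC s) (RtoC (s ^ n))) with (Cmult (RtoC s) (RtoC (s^n))). rewrite RtoC_mult. reflexivity. Qed.
Lemma fact_neq n : INR (fact n) <> 0.
Proof. apply not_0_INR, fact_neq_0. Qed.
Lemma cfact_neq n : cfact n <> RtoC 0.
Proof. unfold cfact. intro H. apply RtoC_inj in H. exact (fact_neq n H). Qed.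
Lemma cexp_R y s : cexp (Cmult (RtoC y) (RtoC s)) = RtoC (exp (y * s)).
Proof. rewrite <- RtoC_mult. unfold cexp, RtoC. simpl. rewrite cos_0, sin_0. f_equal; ring. Qed.

Lemma taylor_fst (f : C -> C) c r1 : (forall t : C, Cmod t < r1 -> is_pseries c t (f t)) ->
  forall s, Rabs s < r1 -> is_pseries (fun k => fst (c k)) s (fst (f (RtoC s))).
Proof.
  intros H s Hs. apply is_pseries_R.
  assert (H1 := Cseries_fst _ _ (H (RtoC s) ltac:(rewrite Cmod_R; exact Hs))).
  eapply is_series_ext. 2: exact H1. intros n. cbv beta.
  rewrite pow_n_R. change (scal (RtoC (s^n)) (c n)) with (Cmult (RtoC (s^n)) (c n)).
  change (fst (Cmult (RtoC (s^n)) (c n)) = fst (c n) * s ^ n). destruct (c n) as [u w]; simpl; ring.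
Qed.
Lemma taylor_snd (f : C -> C) c r1 : (forall t : C, Cmod t < r1 -> is_pseries c t (f t)) ->
  forall s, Rabs s < r1 -> is_pseries (fun k => snd (c k)) s (snd (f (RtoC s))).
Proof.
  intros H s Hs. apply is_pseries_R.
  assert (H1 := Cseries_snd _ _ (H (RtoC s) ltac:(rewrite Cmod_R; exact Hs))).
  eapply is_series_ext. 2: exact H1. intros n. cbv beta.
  rewrite pow_n_R. change (scal (RtoC (s^n)) (c n)) with (Cmult (RtoC (s^n)) (c n)).
  change (snd (Cmult (RtoC (s^n)) (c n)) = snd (c n) * s ^ n). destruct (c n) as [u w]; simpl; ring.
Qed.

Lemma term_eq (z : C) s n : Cdiv (Cmult z (cpow (RtoC s) n)) (cfact n) = Cmult (RtoC (s ^ n / INR (fact n))) z.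
Proof.
  rewrite cpow_R. unfold cfact. rewrite RtoC_div by apply fact_neq.
  field. intro H. apply RtoC_inj in H. exact (fact_neq n H).
Qed.

Lemma exp_ps y s : is_pseries (fun n => y ^ n / INR (fact n)) s (exp (y * s)).
Proof.
  apply is_pseries_R. assert (H := is_exp_Reals (y * s)). apply is_pseries_R in H.
  eapply is_series_ext. 2: exact H. intros n. simpl. rewrite Rpow_mult_distr. field. apply fact_neq.
Qed.

Lemma fst_RC r (z : C) : fst (Cmult (RtoC r) z) = r * fst z.
Proof. destruct z; simpl; ring. Qed.
Lemma snd_RC r (z : C) : snd (Cmult (RtoC r) z) = r * snd z.
Proof. destruct z; simpl; ring. Qed.
Lemma fst_CR r (z : C) : fst (Cmult z (RtoC r)) = fst z * r.
Proof. destruct z; simpl; ring. Qed.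
Lemma snd_CR r (z : C) : snd (Cmult z (RtoC r)) = snd z * r.
Proof. destruct z; simpl; ring. Qed.

Lemma term_eq2 (z : C) y m : Cmult z (Cdiv (cpow (RtoC y) m) (cfact m)) = Cmult (RtoC (y ^ m / INR (fact m))) z.
Proof.
  rewrite cpow_R. unfold cfact. rewrite RtoC_div by apply fact_neq.
  field. intro H. apply RtoC_inj in H. exact (fact_neq m H).
Qed.

Lemma radius_all (a : nat -> R) : (forall s, ex_pseries a s) -> forall s, Rbar_lt (Rabs s) (CV_radius a).
Proof. intros H s. apply (radius_gt a (Rabs s + 1)). intros; apply H. lra. Qed.

Lemma Rdiv_mult_swap (a b c : R) : a / b * c = c / b * a.
Proof. unfold Rdiv. ring. Qed.

Section Gen.
Variables (P : nat -> C -> C) (f : C -> C) (c : nat -> C).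
Hypothesis Htay : exists r1, 0 < r1 /\ forall t : C, Cmod t < r1 -> is_pseries c t (f t).
Hypothesis Hgen : forall x : C, exists rho : R, 0 < rho /\
     forall t : C, Cmod t < rho ->
       is_series (fun n => Cdiv (Cmult (P n x) (cpow t n)) (cfact n))
                 (Cmult (f t) (cexp (Cmult x t))).

Lemma gen_real y n : P n (RtoC y) = Cmult (cfact n) (sm (S n) (fun k => Cmult (c k) (Cdiv (cpow (RtoC y) (n-k)) (cfact (n-k))))).
Proof.
  destruct Htay as [r1 [Hr1 Ht]]. destruct (Hgen (RtoC y)) as [rho [Hrho Hg]].
  set (rr := Rmin r1 rho).
  assert (Hrr : 0 < rr) by (apply Rmin_pos; auto).
  assert (Hs1 : forall s, Rabs s < rr -> Rabs s < r1) by (intros s Hs; eapply Rlt_le_trans; [exact Hs| apply Rmin_l]).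
  assert (Hs2 : forall s, Rabs s < rr -> Cmod (RtoC s) < rho) by (intros s Hs; rewrite Cmod_R; eapply Rlt_le_trans; [exact Hs| apply Rmin_r]).
  assert (Efst : forall n, fst (P n (RtoC y)) / INR (fact n) = PS_mult (fun k => fst (c k)) (fun k => y ^ k / INR (fact k)) n).
  { apply (ps_unique _ _ rr (fun s => fst (f (RtoC s)) * exp (y * s)) Hrr).
    - intros s Hs. apply is_pseries_R.
      assert (H1 := Cseries_fst _ _ (Hg (RtoC s) (Hs2 s Hs))).
      rewrite cexp_R, fst_CR in H1.
      eapply is_series_ext. 2: exact H1. intros m. cbv beta. rewrite term_eq, fst_RC. apply Rdiv_mult_swap.
    - intros s Hs. apply is_pseries_mult.
      + apply (taylor_fst f c r1 Ht). auto.
      + apply exp_ps.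
      + apply (radius_gt _ r1). intros s' Hs'. eexists. apply (taylor_fst f c r1 Ht). auto. auto.
      + apply radius_all. intros; eexists; apply exp_ps. }
  assert (Esnd : forall n, snd (P n (RtoC y)) / INR (fact n) = PS_mult (fun k => snd (c k)) (fun k => y ^ k / INR (fact k)) n).
  { apply (ps_unique _ _ rr (fun s => snd (f (RtoC s)) * exp (y * s)) Hrr).
    - intros s Hs. apply is_pseries_R.
      assert (H1 := Cseries_snd _ _ (Hg (RtoC s) (Hs2 s Hs))).
      rewrite cexp_R, snd_CR in H1.
      eapply is_series_ext. 2: exact H1. intros m. cbv beta. rewrite term_eq, snd_RC. apply Rdiv_mult_swap.
    - intros s Hs. apply is_pseries_mult.
      + apply (taylor_snd f c r1 Ht). auto.
      + apply exp_ps.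
      + apply (radius_gt _ r1). intros s' Hs'. eexists. apply (taylor_snd f c r1 Ht). auto. auto.
      + apply radius_all. intros; eexists; apply exp_ps. }
  apply C_ext.
  - unfold cfact. rewrite fst_RC, sm_fst.
    specialize (Efst n). unfold PS_mult in Efst.
    rewrite <- (sum_eq (fun k => fst (c k) * (y ^ (n - k) / INR (fact (n - k))))).
    rewrite <- Efst. field. apply fact_neq.
    intros k _. rewrite term_eq2, fst_RC. ring.
  - unfold cfact. rewrite snd_RC, sm_snd.
    specialize (Esnd n). unfold PS_mult in Esnd.
    rewrite <- (sum_eq (fun k => snd (c k) * (y ^ (n - k) / INR (fact (n - k))))).
    rewrite <- Esnd. field. apply fact_neq.
    intros k _. rewrite term_eq2, snd_RC. ring.
Qed.
End Gen.


Lemma fin_series (a : nat -> R) N : (forall k, (N < k)%nat -> a k = 0) -> is_series a (sum_f_R0 a N).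
Proof.
  intros H. apply is_series_Reals. intros eps Heps. exists N. intros n Hn.
  assert (E : sum_f_R0 a n = sum_f_R0 a N).
  { induction Hn. auto. simpl. rewrite IHHn, H. ring. lia. }
  rewrite E. unfold R_dist. rewrite Rminus_eq_0, Rabs_R0. exact Heps.
Qed.

Lemma poly_ext (e1 e2 : nat -> C) N :
  (forall y : R, sm N (fun k => Cmult (e1 k) (cpow (RtoC y) k)) = sm N (fun k => Cmult (e2 k) (cpow (RtoC y) k))) ->
  forall x, sm N (fun k => Cmult (e1 k) (cpow x k)) = sm N (fun k => Cmult (e2 k) (cpow x k)).
Proof.
  intros H x.
  set (d := fun k => if (k <? N)%nat then Cminus (e1 k) (e2 k) else RtoC 0).
  assert (Hd : forall y, sm (S N) (fun k => Cmult (d k) (cpow (RtoC y) k)) = RtoC 0).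
  { intros y. simpl. unfold d at 2. rewrite Nat.ltb_irrefl.
    rewrite (sm_ext N _ (fun k => Cminus (Cmult (e1 k) (cpow (RtoC y) k)) (Cmult (e2 k) (cpow (RtoC y) k)))).
    rewrite sm_minus, H. ring.
    intros k Hk. unfold d. rewrite (proj2 (Nat.ltb_lt k N) Hk). ring. }
  assert (Hz : forall y, is_pseries (fun _ : nat => 0) y 0).
  { intros y. apply is_pseries_R.
    assert (H0 := fin_series (fun n : nat => 0 * y ^ n) 0 (fun k _ => Rmult_0_l _)).
    simpl in H0. rewrite Rmult_0_l in H0. exact H0. }
  assert (Hdk : forall k, d k = RtoC 0).
  { intros k. apply C_ext.
    - simpl. symmetry. apply (ps_unique (fun _ => 0) (fun k => fst (d k)) 1 (fun _ => 0) Rlt_0_1).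
      + intros; apply Hz.
      + intros y _. apply is_pseries_R.
        replace 0 with (sum_f_R0 (fun k => fst (d k) * y ^ k) N).
        * apply fin_series. intros k0 Hk0. unfold d. replace (k0 <? N)%nat with false. simpl; ring.
          symmetry. apply Nat.ltb_ge. lia.
        * rewrite (sum_eq (fun k => fst (d k) * y ^ k) (fun k => fst (Cmult (d k) (cpow (RtoC y) k)))).
          rewrite <- (sm_fst N (fun k => Cmult (d k) (cpow (RtoC y) k))). rewrite Hd. reflexivity.
          intros i _. rewrite cpow_R, fst_CR. reflexivity.
    - simpl. symmetry. apply (ps_unique (fun _ => 0) (fun k => snd (d k)) 1 (fun _ => 0) Rlt_0_1).
      + intros; apply Hz.
      + intros y _. apply is_pseries_R.
        replace 0 with (sum_f_R0 (fun k => snd (d k) * y ^ k) N).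
        * apply fin_series. intros k0 Hk0. unfold d. replace (k0 <? N)%nat with false. simpl; ring.
          symmetry. apply Nat.ltb_ge. lia.
        * rewrite (sum_eq (fun k => snd (d k) * y ^ k) (fun k => snd (Cmult (d k) (cpow (RtoC y) k)))).
          rewrite <- (sm_snd N (fun k => Cmult (d k) (cpow (RtoC y) k))). rewrite Hd. reflexivity.
          intros i _. rewrite cpow_R, snd_CR. reflexivity. }
  apply sm_ext. intros k Hk. specialize (Hdk k). unfold d in Hdk.
  rewrite (proj2 (Nat.ltb_lt k N) Hk) in Hdk.
  assert (E : e1 k = e2 k).
  { replace (e1 k) with (Cplus (Cminus (e1 k) (e2 k)) (e2 k)) by ring. rewrite Hdk. ring. }
  rewrite E. reflexivity.
Qed.

Lemma sm_pad N m (e : nat -> C) x : sm N (fun k => Cmult (e k) (cpow x k)) =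
  sm (N + m) (fun k => Cmult (if (k <? N)%nat then e k else RtoC 0) (cpow x k)).
Proof.
  induction m.
  - rewrite Nat.add_0_r. apply sm_ext. intros k Hk. rewrite (proj2 (Nat.ltb_lt k N) Hk). reflexivity.
  - rewrite Nat.add_succ_r. simpl. rewrite <- IHm. replace (N + m <? N)%nat with false.
    rewrite Cmult_0_l, Cplus_0_r. reflexivity. symmetry. apply Nat.ltb_ge. lia.
Qed.

Definition xt (x : C) (m : nat) : C := Cdiv (cpow x m) (cfact m).

Lemma Q_poly (c : nat -> C) n x : Cmult (cfact n) (cv c (xt x) n) =
  sm (S n) (fun j => Cmult (Cdiv (Cmult (cfact n) (c (n - j)%nat)) (cfact j)) (cpow x j)).
Proof.
  unfold cv. rewrite sm_rev, <- sm_scal. apply sm_ext. intros j Hj.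
  replace (S n - 1 - j)%nat with (n - j)%nat by lia. replace (n - (n - j))%nat with j by lia.
  unfold xt. field. apply cfact_neq.
Qed.

Lemma P_ext (p q : C -> C) : is_poly_fun p ->
  (exists N e, forall x, q x = sm N (fun k => Cmult (e k) (cpow x k))) ->
  (forall y : R, p (RtoC y) = q (RtoC y)) -> forall x, p x = q x.
Proof.
  intros [d [e1 He1]] [N [e2 He2]] H x.
  assert (He1' : forall x, p x = sm (d + N) (fun k => Cmult (if (k <? d)%nat then e1 k else RtoC 0) (cpow x k))).
  { intros z. rewrite He1, csum_sm. apply sm_pad. }
  assert (He2' : forall x, q x = sm (d + N) (fun k => Cmult (if (k <? N)%nat then e2 k else RtoC 0) (cpow x k))).
  { intros z. rewrite He2, Nat.add_comm. apply sm_pad. }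
  rewrite He1', He2'. apply poly_ext. intros y. rewrite <- He1', <- He2'. apply H.
Qed.


Lemma upto_spec g n k : (k <= n)%nat -> upto g n k = strong_rec g k.
Proof.
  induction n; intros Hk.
  - replace k with O by lia. reflexivity.
  - simpl. destruct (Nat.leb k n) eqn:E.
    + apply IHn. apply Nat.leb_le. auto.
    + apply Nat.leb_gt in E. replace k with (S n) by lia. unfold strong_rec.
      change (upto g (S n) (S n)) with (if Nat.leb (S n) n then upto g n (S n) else g (S n) (upto g n)).
      rewrite (proj2 (Nat.leb_gt (S n) n) (Nat.lt_succ_diag_r n)). reflexivity.
Qed.

Lemma strong_rec_eq g n : (forall m b1 b2, (forall k, (k < m)%nat -> b1 k = b2 k) -> g m b1 = g m b2) ->
  strong_rec g n = g n (fun k => strong_rec g k).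
Proof.
  intros Hg. destruct n.
  - unfold strong_rec. simpl. apply Hg. intros; lia.
  - unfold strong_rec at 1.
    change (upto g (S n) (S n)) with (if Nat.leb (S n) n then upto g n (S n) else g (S n) (upto g n)).
    rewrite (proj2 (Nat.leb_gt (S n) n) (Nat.lt_succ_diag_r n)). apply Hg.
    intros k Hk. apply upto_spec. lia.
Qed.

Lemma euler_eq m y : euler_poly m y =
  Cminus (cpow y m) (Cmult (Cinv (RtoC 2)) (sm m (fun k => Cmult (cbinom m k) (euler_poly k y)))).
Proof.
  unfold euler_poly at 1. rewrite strong_rec_eq. rewrite csum_sm. reflexivity.
  intros m0 b1 b2 H. rewrite !csum_sm. f_equal. f_equal. apply sm_ext. intros. rewrite H; auto.
Qed.

Lemma bernoulli_eq m y : bernoulli_poly m y =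
  Cminus (cpow y m) (Cmult (Cinv (RtoC (INR (S m)))) (sm m (fun k => Cmult (cbinom (S m) k) (bernoulli_poly k y)))).
Proof.
  unfold bernoulli_poly at 1. rewrite strong_rec_eq. rewrite csum_sm. reflexivity.
  intros m0 b1 b2 H. rewrite !csum_sm. f_equal. f_equal. apply sm_ext. intros. rewrite H; auto.
Qed.

Lemma RtoC_neq r : r <> 0 -> RtoC r <> RtoC 0.
Proof. intros H E. apply RtoC_inj in E. auto. Qed.

Lemma cbinom_eq n k : cbinom n k = Cdiv (cfact n) (Cmult (cfact k) (cfact (n - k))).
Proof.
  unfold cbinom, cfact, Binomial.C. rewrite RtoC_div, RtoC_mult. reflexivity.
  apply Rmult_integral_contrapositive; split; apply fact_neq.
Qed.

Lemma cpow_add z m k : cpow z (m + k) = Cmult (cpow z m) (cpow z k).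
Proof. induction m; simpl. ring. rewrite IHm. ring. Qed.
Lemma cpow_mul z w m : cpow (Cmult z w) m = Cmult (cpow z m) (cpow w m).
Proof. induction m; simpl. ring. rewrite IHm. ring. Qed.
Lemma cpow_neq z m : z <> RtoC 0 -> cpow z m <> RtoC 0.
Proof.
  intros Hz. induction m; simpl. apply RtoC_neq; lra.
  apply Cmult_neq_0; auto.
Qed.

Lemma sign_eq k : cpow (RtoC (-1)) k = if Nat.even k then RtoC 1 else RtoC (-1).
Proof.
  induction k. reflexivity.
  simpl cpow. rewrite IHk. rewrite Nat.even_succ, <- Nat.negb_even.
  destruct (Nat.even k); simpl; rewrite <- RtoC_mult; f_equal; ring.
Qed.

Lemma powerRZ_sub a n k : (k <= n)%nat -> powerRZ a (Z.of_nat n - Z.of_nat k) = a ^ (n - k).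
Proof. intros H. rewrite <- Nat2Z.inj_sub by auto. rewrite pow_powerRZ. reflexivity. Qed.
Lemma powerRZ_sub1 a n k : a <> 0 -> (k <= n)%nat -> powerRZ a (Z.of_nat n - Z.of_nat (S k)) = a ^ (n - k) / a.
Proof.
  intros Ha H. replace (Z.of_nat n - Z.of_nat (S k))%Z with (Z.of_nat (n - k) + (-1))%Z by lia.
  rewrite powerRZ_add by auto. rewrite <- pow_powerRZ. simpl. field. auto.
Qed.


Lemma cfact0 : cfact 0 = RtoC 1.
Proof. reflexivity. Qed.
Lemma xt0 z : xt z 0 = RtoC 1.
Proof. unfold xt. rewrite cfact0. simpl. field. Qed.

Section Poly.
Variables (a : R) (x : C).
Hypothesis Ha : a <> 0.
Let aC : RtoC a <> RtoC 0 := RtoC_neq a Ha.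

Lemma xt_pow_div m : Cmult (xt (RtoC a) m) (cpow (Cdiv x (RtoC a)) m) = xt x m.
Proof.
  unfold xt. replace (Cmult (Cdiv (cpow (RtoC a) m) (cfact m)) (cpow (Cdiv x (RtoC a)) m))
    with (Cdiv (cpow (Cmult (RtoC a) (Cdiv x (RtoC a))) m) (cfact m)).
  f_equal. f_equal. field. auto.
  rewrite cpow_mul. field. apply cfact_neq.
Qed.

Lemma binom_split m k : (k <= m)%nat -> Cmult (xt (RtoC a) m) (cbinom m k) = Cmult (xt (RtoC a) (m - k)) (xt (RtoC a) k).
Proof.
  intros H. unfold xt. rewrite cbinom_eq. replace m with ((m - k) + k)%nat at 1 3 by lia.
  rewrite cpow_add. replace (m - k + k - k)%nat with (m - k)%nat by lia.
  replace (m - k + k)%nat with m by lia.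
  field. repeat split; apply cfact_neq.
Qed.

Definition eg m := Cmult (xt (RtoC a) m) (euler_poly m (Cdiv x (RtoC a))).
Definition kg m := Cmult (xt (RtoC a) m) (bernoulli_poly m (Cdiv x (RtoC a))).

Lemma eg_rec m : Cplus (cv eg (xt (RtoC a)) m) (eg m) = Cmult (RtoC 2) (xt x m).
Proof.
  set (s := sm m (fun k => Cmult (eg k) (xt (RtoC a) (m - k)))).
  assert (E : eg m = Cminus (xt x m) (Cmult (Cinv (RtoC 2)) s)).
  { assert (H1 : Cmult (xt (RtoC a) m) (sm m (fun k => Cmult (cbinom m k) (euler_poly k (Cdiv x (RtoC a))))) = s).
    { rewrite <- sm_scal. unfold s. apply sm_ext. intros k Hk.
      transitivity (Cmult (Cmult (xt (RtoC a) m) (cbinom m k)) (euler_poly k (Cdiv x (RtoC a)))). ring.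
      rewrite binom_split by lia. unfold eg. ring. }
    unfold eg at 1. rewrite euler_eq.
    transitivity (Cminus (Cmult (xt (RtoC a) m) (cpow (Cdiv x (RtoC a)) m))
       (Cmult (Cinv (RtoC 2)) (Cmult (xt (RtoC a) m) (sm m (fun k => Cmult (cbinom m k) (euler_poly k (Cdiv x (RtoC a)))))))).
    ring. rewrite xt_pow_div, H1. reflexivity. }
  unfold cv. change (sm (S m) (fun k => Cmult (eg k) (xt (RtoC a) (m - k)))) with
    (Cplus s (Cmult (eg m) (xt (RtoC a) (m - m)))).
  rewrite Nat.sub_diag, xt0, E. field.
Qed.
Lemma cfactS m : cfact (S m) = Cmult (RtoC (INR (S m))) (cfact m).
Proof. unfold cfact. rewrite <- RtoC_mult. f_equal. rewrite <- mult_INR. reflexivity. Qed.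

Lemma xt1 : xt (RtoC a) 1 = RtoC a.
Proof. unfold xt. rewrite cfactS, cfact0. simpl. field. Qed.

Lemma kg_rec m : Cminus (cv (xt (RtoC a)) kg (S m)) (kg (S m)) = Cmult (RtoC a) (xt x m).
Proof.
  set (s := sm m (fun k => Cmult (kg k) (xt (RtoC a) (S m - k)))).
  assert (HS : RtoC (INR (S m)) <> RtoC 0) by (apply RtoC_neq; apply not_0_INR; lia).
  assert (E : Cmult (kg m) (RtoC a) = Cminus (Cmult (RtoC a) (xt x m)) s).
  { assert (H1 : Cmult (Cmult (Cmult (xt (RtoC a) m) (RtoC a)) (Cinv (RtoC (INR (S m)))))
                  (sm m (fun k => Cmult (cbinom (S m) k) (bernoulli_poly k (Cdiv x (RtoC a))))) = s).
    { replace (Cmult (Cmult (xt (RtoC a) m) (RtoC a)) (Cinv (RtoC (INR (S m))))) with (xt (RtoC a) (S m)).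
      2:{ unfold xt. rewrite cfactS. simpl. field. split; auto. apply cfact_neq. }
      rewrite <- sm_scal. unfold s. apply sm_ext. intros k Hk.
      transitivity (Cmult (Cmult (xt (RtoC a) (S m)) (cbinom (S m) k)) (bernoulli_poly k (Cdiv x (RtoC a)))). ring.
      rewrite binom_split by lia. unfold kg. ring. }
    unfold kg at 1. rewrite bernoulli_eq.
    transitivity (Cminus (Cmult (RtoC a) (Cmult (xt (RtoC a) m) (cpow (Cdiv x (RtoC a)) m)))
       (Cmult (Cmult (Cmult (xt (RtoC a) m) (RtoC a)) (Cinv (RtoC (INR (S m)))))
                  (sm m (fun k => Cmult (cbinom (S m) k) (bernoulli_poly k (Cdiv x (RtoC a))))))).
    ring. rewrite xt_pow_div, H1. reflexivity. }
  rewrite cv_comm. unfold cv.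
  change (sm (S (S m)) (fun k => Cmult (kg k) (xt (RtoC a) (S m - k)))) with
    (Cplus (Cplus s (Cmult (kg m) (xt (RtoC a) (S m - m)))) (Cmult (kg (S m)) (xt (RtoC a) (S m - S m)))).
  rewrite Nat.sub_diag, xt0. replace (S m - m)%nat with 1%nat by lia. rewrite xt1, E. ring.
Qed.

Lemma kg_rec0 : Cminus (cv (xt (RtoC a)) kg 0) (kg 0) = RtoC 0.
Proof. unfold cv. simpl. rewrite xt0. ring. Qed.
End Poly.


Lemma cv_addr u v w n : cv u (fun k => Cplus (v k) (w k)) n = Cplus (cv u v n) (cv u w n).
Proof. rewrite !(cv_comm u). apply cv_addl. Qed.
Lemma cv_subr u v w n : cv u (fun k => Cminus (v k) (w k)) n = Cminus (cv u v n) (cv u w n).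
Proof. rewrite !(cv_comm u). apply cv_subl. Qed.
Lemma cv_scalr z u v n : cv u (fun k => Cmult z (v k)) n = Cmult z (cv u v n).
Proof. rewrite !(cv_comm u). apply cv_scall. Qed.

Lemma cv_xt0 c n : cv c (xt (RtoC 0)) n = c n.
Proof.
  rewrite cv_comm, cv_head, xt0.
  rewrite (sm_ext n _ (fun _ => RtoC 0)). rewrite sm_zero. ring.
  intros k _. unfold xt. simpl. field. apply cfact_neq.
Qed.

Lemma cancel_fact n z w : Cmult (cfact n) z = Cmult (cfact n) w -> z = w.
Proof.
  intros H. replace z with (Cmult (Cinv (cfact n)) (Cmult (cfact n) z)) by (field; apply cfact_neq).
  rewrite H. field. apply cfact_neq.
Qed.


Theorem mainTheorem4
  (a : R) (P : nat -> Complex.C -> Complex.C) (f : Complex.C -> Complex.C)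
  (c : nat -> Complex.C) (ak : nat -> R) :
  a <> 0 ->
  (forall n, is_poly_fun (P n)) ->
  holomorphic_at0 f ->
  taylor_series_at0 f c ->
  f (RtoC 0) <> RtoC 0 ->
  (forall x : Complex.C, exists rho : R, 0 < rho /\
     forall t : Complex.C, Cmod t < rho ->
       is_series (fun n => Cdiv (Cmult (P n x) (cpow t n)) (cfact n))
                 (Cmult (f t) (cexp (Cmult x t)))) ->
  (forall (n : nat) (x : Complex.C),
     P n (Cminus (RtoC a) x) = Cmult (cpow (RtoC (-1)) n) (P n x)) ->
  let Fc := fun k => Cminus (c k) (Cdiv (RtoC (ak k)) (cfact k)) in
  (ps_odd Fc ->
     forall (n : nat) (x : Complex.C),
       P n x = csum_lt (S n) (fun k =>
         if Nat.even k then
           Cmult (Cmult (Cmult (RtoC (ak k)) (cbinom n k))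
                        (RtoC (powerRZ a (Z.of_nat n - Z.of_nat k))))
                 (euler_poly (n - k) (Cdiv x (RtoC a)))
         else RtoC 0)) /\
  (ps_even Fc ->
     forall (n : nat) (x : Complex.C),
       P n x = Cmult (RtoC (-2)) (csum_lt (S (S n)) (fun k =>
         if Nat.odd k then
           Cmult (Cmult (Cmult (Cdiv (RtoC (ak k)) (RtoC (INR k))) (cbinom n (k - 1)))
                        (RtoC (powerRZ a (Z.of_nat n - Z.of_nat k))))
                 (bernoulli_poly (n + 1 - k) (Cdiv x (RtoC a)))
         else RtoC 0))).
Proof.
  intros Ha Hpoly _ Htay _ Hgen Hsym Fc.
  assert (aC : RtoC a <> RtoC 0) by (apply RtoC_neq; auto).
  assert (Pform : forall n x, P n x = Cmult (cfact n) (cv c (xt x) n)).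
  { intros n. apply P_ext. apply Hpoly.
    exists (S n), (fun j => Cdiv (Cmult (cfact n) (c (n - j)%nat)) (cfact j)). intros; apply Q_poly.
    intros y. exact (gen_real P f c Htay Hgen y n). }
  assert (Rel : forall n, cv (xt (RtoC a)) c n = Cmult (cpow (RtoC (-1)) n) (c n)).
  { intros n. assert (H := Hsym n (RtoC 0)).
    replace (Cminus (RtoC a) (RtoC 0)) with (RtoC a) in H by (apply C_ext; simpl; ring).
    rewrite !Pform, cv_xt0 in H. rewrite cv_comm. apply (cancel_fact n). rewrite H. ring. }
  assert (Hsg : forall k, Nat.odd k = negb (Nat.even k)) by (intros; rewrite Nat.negb_even; auto).
  split.
  - intros Hodd n x.
    set (ce := fun k => if Nat.even k then c k else RtoC 0).
    assert (Hc : forall k, Nat.even k = true -> c k = Cdiv (RtoC (ak k)) (cfact k)).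
    { intros k Hk. specialize (Hodd k Hk). unfold Fc in Hodd.
      replace (c k) with (Cplus (Cminus (c k) (Cdiv (RtoC (ak k)) (cfact k))) (Cdiv (RtoC (ak k)) (cfact k))) by ring.
      rewrite Hodd. ring. }
    assert (ST : forall m, cv ce (eg a x) m = cv c (xt x) m).
    { apply (L_inj (xt (RtoC a))). apply xt0. intros m.
      rewrite (cv_comm (xt (RtoC a)) (cv ce (eg a x))), cv_assoc, <- cv_addr.
      rewrite (cv_ext ce ce (fun k => Cplus (cv (eg a x) (xt (RtoC a)) k) (eg a x k)) (fun k => Cmult (RtoC 2) (xt x k)))
        by (intros; auto; apply eg_rec; auto).
      rewrite cv_scalr.
      rewrite <- cv_assoc, <- cv_addl.
      rewrite (cv_ext (fun k => Cplus (cv (xt (RtoC a)) c k) (c k)) (fun k => Cmult (RtoC 2) (ce k)) (xt x) (xt x)).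
      rewrite cv_scall, cv_comm. reflexivity.
      intros k. rewrite Rel, sign_eq. unfold ce. destruct (Nat.even k); ring. intros; auto. }
    rewrite Pform, csum_sm, <- ST. unfold cv. rewrite <- sm_scal. apply sm_ext. intros k Hk.
    unfold ce. destruct (Nat.even k) eqn:Ek.
    + rewrite (Hc k Ek), powerRZ_sub by lia. rewrite cbinom_eq. unfold eg, xt. rewrite cpow_R.
      field. repeat split; apply cfact_neq.
    + ring.
  - intros Heven n x.
    set (co := fun k => if Nat.odd k then c k else RtoC 0).
    assert (Hc : forall k, Nat.odd k = true -> c k = Cdiv (RtoC (ak k)) (cfact k)).
    { intros k Hk. specialize (Heven k Hk). unfold Fc in Heven.
      replace (c k) with (Cplus (Cminus (c k) (Cdiv (RtoC (ak k)) (cfact k))) (Cdiv (RtoC (ak k)) (cfact k))) by ring.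
      rewrite Heven. ring. }
    set (Y := fun j => Cmult (RtoC (-a/2)) (cv c (xt x) j)).
    assert (WV : forall m, shift Y m = cv co (kg a x) m).
    { apply (M_inj (xt (RtoC a))). apply xt0. rewrite xt1; auto. intros m.
      rewrite (cv_comm (xt (RtoC a)) (cv co (kg a x))), cv_assoc, <- cv_subr.
      rewrite (cv_ext co co (fun k => Cminus (cv (kg a x) (xt (RtoC a)) k) (kg a x k)) (shift (fun j => Cmult (RtoC a) (xt x j)))).
      2: auto.
      2:{ intros k. rewrite cv_comm. destruct k. apply kg_rec0. simpl shift. apply kg_rec; auto. }
      destruct m as [|j].
      - rewrite !cv_shift0. simpl. ring.
      - rewrite !cv_shift. simpl shift. rewrite cv_scalr. unfold Y. rewrite cv_scalr.
        transitivity (Cmult (RtoC (-a/2)) (Cminus (cv (xt (RtoC a)) (cv c (xt x)) j) (cv c (xt x) j))). ring. rewrite <- cv_assoc, <- cv_subl.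
        rewrite (cv_ext (fun k => Cminus (cv (xt (RtoC a)) c k) (c k)) (fun k => Cmult (RtoC (-2)) (co k)) (xt x) (xt x)).
        rewrite cv_scall. transitivity (Cmult (Cmult (RtoC (-a/2)) (RtoC (-2))) (cv co (xt x) j)). ring.
        f_equal. rewrite <- RtoC_mult. f_equal. field.
        intros k. rewrite Rel, sign_eq. unfold co. rewrite Hsg. destruct (Nat.even k); simpl; rewrite <- ?RtoC_opp; try ring.
        intros; auto. }
    specialize (WV (S n)). simpl shift in WV. unfold Y in WV.
    assert (E : csum_lt (S (S n)) (fun k =>
         if Nat.odd k then
           Cmult (Cmult (Cmult (Cdiv (RtoC (ak k)) (RtoC (INR k))) (cbinom n (k - 1)))
                        (RtoC (powerRZ a (Z.of_nat n - Z.of_nat k))))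
                 (bernoulli_poly (n + 1 - k) (Cdiv x (RtoC a)))
         else RtoC 0) = Cmult (Cdiv (cfact n) (RtoC a)) (cv co (kg a x) (S n))).
    { rewrite csum_sm. unfold cv. rewrite <- sm_scal. apply sm_ext. intros k Hk.
      unfold co. destruct (Nat.odd k) eqn:Ek.
      - destruct k as [|k']. discriminate.
        replace (S k' - 1)%nat with k' by lia. replace (n + 1 - S k')%nat with (n - k')%nat by lia.
        replace (S n - S k')%nat with (n - k')%nat by lia.
        rewrite (Hc _ Ek), powerRZ_sub1 by (auto; lia). rewrite cbinom_eq. unfold kg, xt. rewrite cpow_R, cfactS.
        rewrite RtoC_div by auto.
        field. repeat split; try apply cfact_neq; auto. apply RtoC_neq. apply not_0_INR. lia.
      - ring. }
    rewrite E, <- WV, Pform. rewrite RtoC_div, !RtoC_opp by lra. field. auto.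
Qed.
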